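(* Let $\mathcal{E}=(E,\leq,\sharp)$ be a prime event structure, $C$ a configuration of $\mathcal{E}$, and $e,e'\in E$. Suppose there are processes $P_1,P_2,P_3,P_4$ with $\emptyset\triangleright\textsc{espsi}(\mathcal{E},C)\xrightarrow{\overline{e}e}P_1$, $\emptyset\triangleright P_1\xrightarrow{\overline{e'}e'}P_2$, $\emptyset\triangleright\textsc{espsi}(\mathcal{E},C)\xrightarrow{\overline{e'}e'}P_3$, $\emptyset\triangleright P_3\xrightarrow{\overline{e}e}P_4$, and $P_2=P_4$. Then $e\,||\,e'$ in $\mathcal{E}$.
   Context: A prime event structure is a triple $\mathcal{E}=(E,\leq,\sharp)$ where $E$ is a set of events (names from a nominal set), $\leq$ is a partial order on $E$ with $\{d\mid d\leq e\}$ finite for every $e$, and $\sharp$ is an irreflexive symmetric relation on $E$ with conflict heredity ($d\leq e$ and $d\sharp f$ imply $e\sharp f$). Two events are concurrent, $d\,||\,e$, iff none of $d\leq e$, $e\leq d$, $d\sharp e$ holds. A configuration is a finite, conflict-free, downward-closed subset of $E$. Psi-calculus fragment. Processes: assertion processes $(\!|\Psi|\!)$, output prefixes $\overline{M}\langle N\rangle.P$, case processes $\mathbf{case}\ \varphi_1:P_1,\dots,\varphi_n:P_n$, and parallel compositions (also of infinite families). Frames: $\mathcal{F}((\!|\Psi|\!))=\Psi$, $\mathcal{F}(P\mid Q)=\mathcal{F}(P)\otimes\mathcal{F}(Q)$ (composition over all components for families), and the frame of prefixed and case processes is the unit $\mathbf{1}$. Transitions $\Psi\triangleright P\xrightarrow{\alpha}P'$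 are generated by: (Out) if $\Psi\vdash M\leftrightarrow K$ then $\Psi\triangleright\overline{M}\langle N\rangle.P\xrightarrow{\overline{K}N}P$; (Case) if $\Psi\triangleright P_i\xrightarrow{\alpha}P'$ and $\Psi\vdash\varphi_i$ then $\Psi\triangleright\mathbf{case}\ \tilde\varphi:\tilde P\xrightarrow{\alpha}P'$; (Par) if $\Psi\otimes\mathcal{F}(Q)\triangleright P\xrightarrow{\alpha}P'$ then $\Psi\triangleright P\mid Q\xrightarrow{\alpha}P'\mid Q$, symmetrically for $Q$, and for a parallel family one component moves in context $\Psi$ composed with the frames of all other components, the others remaining unchanged. Assertion processes have no transitions. Event-psi instance over $E$: terms are elements of $E$; conditions are pairs $(L,R)$ of subsets of $E$; assertions are subsets of $E$; $\otimes=\cup$; $\mathbf{1}=\emptyset$; entailment: $\Psi\vdash(L,R)$ iff $L\subseteq\Psi$ and $\Psi\cap R=\emptyset$, and $\Psi\vdash a\leftrightarrow b$ iff $a=b$. Translation: $\textsc{espsi}(\mathcal{E},C)=\big|_{e\in E}P_e$ where $P_e=(\!|\{e\}|\!)$ if $e\in C$ and otherwise $P_e=\mathbf{case}\ \varphi_e:\overline{e}\langle e\rangle.(\!|\{e\}|\!)$, with $\varphi_e=(\{d\in E\mid d\leq e,\ d\neq e\},\{d\in E\mid d\sharp e\})$. Processes are compared as $E$-indexed parallel families. The paper writes the transition labelled $\overline{e}e$ simply as $\xrightarrow{e}$. *)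

(* Defs.v *)
From Stdlib Require Import List ClassicalDescription.
Import ListNotations.

Set Implicit Arguments.

Record PES (E : Type) := {
  le : E -> E -> Prop;
  conf : E -> E -> Prop;
  le_refl : forall e, le e e;
  le_trans : forall d e f, le d e -> le e f -> le d f;
  le_antisym : forall d e, le d e -> le e d -> d = e;
  le_fin : forall e, exists l : list E, forall d, le d e -> In d l;
  conf_irrefl : forall e, ~ conf e e;
  conf_sym : forall d e, conf d e -> conf e d;
  conf_hered : forall d e f, le d e -> conf d f -> conf e f
}.

Definition concurrent (E : Type) (ES : PES E) (d e : E) : Prop :=
  ~ le ES d e /\ ~ le ES e d /\ ~ conf ES d e.

Definition configuration (E : Type) (ES : PES E) (C : E -> Prop) : Prop :=
  (exists l : list E, forall x, C x -> In x l) /\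
  (forall d e, C d -> C e -> ~ conf ES d e) /\
  (forall d e, le ES d e -> C e -> C d).

Definition assertion (E : Type) := E -> Prop.
Definition condition (E : Type) := ((E -> Prop) * (E -> Prop))%type.

Definition compose (E : Type) (P Q : assertion E) : assertion E :=
  fun x => P x \/ Q x.
Definition unit_assertion (E : Type) : assertion E := fun _ => False.

Definition entails (E : Type) (Psi : assertion E) (phi : condition E) : Prop :=
  (forall x, fst phi x -> Psi x) /\ (forall x, Psi x -> snd phi x -> False).

Definition chan_eq (E : Type) (Psi : assertion E) (a b : E) : Prop := a = b.

Inductive proc (E : Type) : Type :=
| PAssert : assertion E -> proc E
| POut : E -> E -> proc E -> proc E
| PCase : list (condition E * proc E) -> proc E
| PPar : proc E -> proc E -> proc E
| PFam : (E -> proc E) -> proc E.                 (* E-indexed parallel family *)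

Arguments PAssert {E}.
Arguments POut {E}.
Arguments PCase {E}.
Arguments PPar {E}.
Arguments PFam {E}.

Fixpoint frame (E : Type) (P : proc E) : assertion E :=
  match P with
  | PAssert Psi => Psi
  | POut _ _ _ => @unit_assertion E
  | PCase _ => @unit_assertion E
  | PPar P Q => compose (frame P) (frame Q)
  | PFam F => fun x => exists i, frame (F i) x
  end.

Inductive label (E : Type) : Type :=
| LOut : E -> E -> label E.
Arguments LOut {E}.

Inductive trans (E : Type) : assertion E -> proc E -> label E -> proc E -> Prop :=
| TOut : forall Psi M K N P,
    chan_eq Psi M K -> trans Psi (POut M N P) (LOut K N) P
| TCase : forall Psi l phi P a P',
    In (phi, P) l -> trans Psi P a P' -> entails Psi phi ->
    trans Psi (PCase l) a P'
| TParL : forall Psi P Q a P',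
    trans (compose Psi (frame Q)) P a P' ->
    trans Psi (PPar P Q) a (PPar P' Q)
| TParR : forall Psi P Q a Q',
    trans (compose Psi (frame P)) Q a Q' ->
    trans Psi (PPar P Q) a (PPar P Q')
| TFam : forall Psi (F G : E -> proc E) i a,
    trans (compose Psi (fun x => exists j, j <> i /\ frame (F j) x)) (F i) a (G i) ->
    (forall j, j <> i -> G j = F j) ->
    trans Psi (PFam F) a (PFam G).

Definition singleton (E : Type) (e : E) : assertion E := fun x => x = e.

Definition phi_e (E : Type) (ES : PES E) (e : E) : condition E :=
  (fun d => le ES d e /\ d <> e, fun d => conf ES d e).

Definition espsi_comp (E : Type) (ES : PES E) (C : E -> Prop) (e : E) : proc E :=
  if excluded_middle_informative (C e) then PAssert (singleton e)
  else PCase [(phi_e ES e, POut e e (PAssert (singleton e)))].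

Definition espsi (E : Type) (ES : PES E) (C : E -> Prop) : proc E :=
  PFam (espsi_comp ES C).

(* Main.v *)
Require Import Defs.
From Stdlib Require Import List Classical ClassicalDescription.
Import ListNotations.

Lemma inv_assert (E : Type) Psi (s : assertion E) l Q : ~ trans Psi (PAssert s) l Q.
Proof. intro H; inversion H. Qed.

Lemma inv_case (E : Type) Psi (phi : condition E) m n P a b Q :
  trans Psi (PCase [(phi, POut m n P)]) (LOut a b) Q ->
  a = m /\ b = n /\ Q = P /\ entails Psi phi.
Proof.
  intro H; inversion H as [|? ? phi0 P0 ? ? Hin Ht Hen| | |]; subst.
  destruct Hin as [Hin|[]]. inversion Hin; subst.
  inversion Ht; subst. unfold chan_eq in *. subst. auto.
Qed.

Lemma inv_fam (E : Type) Psi (F : E -> proc E) l Q :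
  trans Psi (PFam F) l Q -> exists G i,
    trans (compose Psi (fun x => exists j, j <> i /\ frame (F j) x)) (F i) l (G i) /\
    (forall j, j <> i -> G j = F j) /\ Q = PFam G.
Proof. intro H; inversion H; subst. exists G, i; auto. Qed.

Lemma step_comp (E : Type) (ES : PES E) C Psi i a Q :
  trans Psi (espsi_comp ES C i) (LOut a a) Q ->
  ~ C i /\ a = i /\ Q = PAssert (singleton i) /\ entails Psi (phi_e ES i).
Proof.
  unfold espsi_comp. destruct (excluded_middle_informative (C i)) as [Hc|Hc].
  - intro H; exfalso; eapply inv_assert; eauto.
  - intro H; apply inv_case in H as (?&_&?&?); subst; auto.
Qed.

Lemma frame_comp (E : Type) (ES : PES E) C j x :
  frame (espsi_comp ES C j) x -> C j /\ x = j.
Proof.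
  unfold espsi_comp. destruct (excluded_middle_informative (C j)) as [Hc|Hc];
  simpl; unfold singleton, unit_assertion; tauto.
Qed.

Lemma first_step (E : Type) (ES : PES E) C a Q :
  trans (@unit_assertion E) (espsi ES C) (LOut a a) Q ->
  ~ C a /\ (forall d, le ES d a -> d <> a -> C d) /\
  exists G, Q = PFam G /\ G a = PAssert (singleton a) /\
     (forall j, j <> a -> G j = espsi_comp ES C j).
Proof.
  intro H. apply inv_fam in H as (G & i & Ht & Hg & ->).
  apply step_comp in Ht as (Hc & -> & Hgi & [Hl Hr]).
  split; [exact Hc|split].
  - intros d H1 H2. destruct (Hl d (conj H1 H2)) as [[]|(j&_&Hf)].
    apply frame_comp in Hf as [? ->]; auto.
  - exists G; auto.
Qed.

Theorem mainTheorem4 (E : Type) (ES : PES E) (C : E -> Prop) (e e' : E)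
  (P1 P2 P3 P4 : proc E) :
  configuration ES C ->
  trans (@unit_assertion E) (espsi ES C) (LOut e e) P1 ->
  trans (@unit_assertion E) P1 (LOut e' e') P2 ->
  trans (@unit_assertion E) (espsi ES C) (LOut e' e') P3 ->
  trans (@unit_assertion E) P3 (LOut e e) P4 ->
  P2 = P4 ->
  concurrent ES e e'.
Proof.
  intros _ H1 H2 H3 _ _.
  apply first_step in H1 as (Ce & Pe & G & -> & Ge & Gj).
  apply first_step in H3 as (Ce' & Pe' & _).
  apply inv_fam in H2 as (G2 & i & Ht & _ & _).
  destruct (classic (i = e)) as [->|Hne].
  { rewrite Ge in Ht; exfalso; eapply inv_assert; eauto. }
  rewrite (Gj i Hne) in Ht.
  apply step_comp in Ht as (_ & <- & _ & [_ Hr]).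
  unfold concurrent. split; [|split].
  - intro H. apply Ce. apply Pe'; auto.
  - intro H. apply Ce'. apply Pe; auto.
  - intro H. apply (Hr e).
    + right. exists e. split; [auto|]. rewrite Ge. reflexivity.
    + exact H.
Qed.
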